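(* Consider configurations consisting only of colored chips (no jokers, no dominoes). Call such a configuration $E$ sufficient if $E$ achieves $3$ dominoes, and minimal sufficient if $E$ is sufficient and no proper sub-configuration of $E$ (i.e. one obtained by removing at least one chip) achieves $3$ dominoes. Then, up to permutation of the three colors, there are exactly two minimal sufficient configurations: $M=(3,3,1)$ (three chips of one color, three of a second, one of the third) and $N=(3,2,2)$. Moreover, for a game with $p\ge1$ players with initial configuration $I$ (consisting of $2p$ colored chips), survival is possible if and only if $I$ contains (componentwise, after some permutation of colors) $M$ or $N$. Finally, a game with $p$ players is non-trivial if and only if $p\ge 4$.
   Context: Game model: there are colored chips of three colors, ''jokers'', and dominoes. A configuration is a tuple $(a,b,c,x,d)$ of nonnegative integers: $a,b,c$ colored chips of the three colors, $x$ jokers, $d$ dominoes. Two kinds of exchanges are allowed: Rule 1: remove three chips, consisting of some number $j\in\{0,1,2,3\}$ of jokers together with $3-j$ colored chips of pairwise distinct colors, and add one domino and one joker. Rule 2: if $d\ge 3$, remove three dominoes and add seven jokers. (Jokers model chips returned by the exchanges, whose color may be freely chosen.) A configuration $E$ yields $F$ if $F$ is obtained from $E$ by a finite (possibly empty) sequence of exchanges; $E$ achieves $F$ if $E$ yields some configuration that is componentwise $\ge F$. A game with $p$ players starts from an initial configuration $I$ consisting of $2p$ colored chips (any color distribution), no jokers and no dominoes; ''survival'' means $I$ achieves $p$ dominoes. A game with $p$ players is trivial if survival is impossible for every such initial configuration $I$, and non-trivial otherwise. *)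

(* Defs.v *)
From mathcomp Require Import all_boot.
From Stdlib Require Import Relations.
Set Implicit Arguments. Unset Strict Implicit. Unset Printing Implicit Defensive.

(* A configuration (a,b,c,x,d): a,b,c colored chips, x jokers, d dominoes. *)
Record config := Config { ca : nat; cb : nat; cc : nat; cx : nat; cd : nat }.

(* Rule 1: remove j jokers and 3-j colored chips of pairwise distinct colors
   (ea/eb/ec indicate whether one chip of color a/b/c is removed),
   add one domino and one joker. *)
Definition rule1 (E F : config) : Prop :=
  exists (ea eb ec : bool) (j : nat),
    [/\ ea + eb + ec + j = 3, ea <= ca E, eb <= cb E, ec <= cc E & j <= cx E] /\
    F = Config (ca E - ea) (cb E - eb) (cc E - ec) (cx E - j + 1) (cd E + 1).

Definition rule2 (E F : config) : Prop :=
  3 <= cd E /\ F = Config (ca E) (cb E) (cc E) (cx E + 7) (cd E - 3).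

Definition exchange (E F : config) : Prop := rule1 E F \/ rule2 E F.

Definition yields : config -> config -> Prop := clos_refl_trans config exchange.

Definition cle (F G : config) : Prop :=
  [/\ ca F <= ca G, cb F <= cb G, cc F <= cc G, cx F <= cx G & cd F <= cd G].

Definition achieves (E F : config) : Prop := exists G, yields E G /\ cle F G.

Definition chips_only (E : config) : Prop := cx E = 0 /\ cd E = 0.

Definition dominoes (n : nat) : config := Config 0 0 0 0 n.

Definition sufficient (E : config) : Prop := achieves E (dominoes 3).

Definition minimal_sufficient (E : config) : Prop :=
  chips_only E /\ sufficient E /\
  forall E', cle E' E -> E' <> E -> ~ sufficient E'.

Definition color_perm (E F : config) : Prop :=
  perm_eq [:: ca E; cb E; cc E] [:: ca F; cb F; cc F] /\ cx F = cx E /\ cd F = cd E.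

Definition M : config := Config 3 3 1 0 0.
Definition N : config := Config 3 2 2 0 0.

Definition initial (p : nat) (I : config) : Prop :=
  chips_only I /\ ca I + cb I + cc I = 2 * p.

Definition survival (p : nat) (I : config) : Prop := achieves I (dominoes p).

Definition trivial_game (p : nat) : Prop := forall I, initial p I -> ~ survival p I.
Definition nontrivial_game (p : nat) : Prop := ~ trivial_game p.

(* Main.v *)
Require Import Defs.
From mathcomp Require Import all_boot.
From mathcomp Require Import zify.
From Stdlib Require Import Relations Classical.
Set Implicit Arguments. Unset Strict Implicit.

Definition containsMN (E : config) : Prop :=
  exists F, (color_perm M F \/ color_perm N F) /\ cle F E.

Lemma ytrans x y z : yields x y -> yields y z -> yields x z.
Proof. exact: rt_trans. Qed.
Arguments ytrans {x y z}.

Definition cadd (E X : config) : config :=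
  Config (ca E + ca X) (cb E + cb X) (cc E + cc X) (cx E + cx X) (cd E + cd X).

Lemma exchange_add E G X : exchange E G -> exchange (cadd E X) (cadd G X).
Proof.
case=> [[ea [eb [ec [j [[h1 h2 h3 h4 h5] ->]]]]]|[h1 ->]].
- left; exists ea, eb, ec, j; split.
  + rewrite /cadd /=; split => //=; lia.
  + rewrite /cadd /=; f_equal => /=; case: ea h2 {h1}; case: eb h3; case: ec h4 => /= *; lia.
- right; rewrite /cadd /=; split => /=; first lia.
  f_equal => /=; lia.
Qed.

Lemma yields_add E G X : yields E G -> yields (cadd E X) (cadd G X).
Proof.
elim=> [x y h|x|x y z _ h1 _ h2].
- by apply: rt_step; apply: exchange_add.
- exact: rt_refl.
- exact: (rt_trans _ _ _ _ _ h1 h2).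
Qed.

Lemma r1j a b c x d : 3 <= x -> yields (Config a b c x d) (Config a b c (x - 2) d.+1).
Proof.
move=> hx; apply: rt_step; left; exists false, false, false, 3; split.
- by split => //=.
- f_equal => /=; lia.
Qed.

Lemma grow a b c x d k : 7 <= x -> yields (Config a b c x d) (Config a b c (x + k) d).
Proof.
move=> hx; elim: k => [|k IH]; first by rewrite addn0; apply: rt_refl.
apply: (ytrans IH).
eapply ytrans; first (apply: r1j; lia).
eapply ytrans; first (apply: r1j => /=; lia).
eapply ytrans; first (apply: r1j => /=; lia).
apply: rt_step; right; split => /=; first lia.
f_equal; lia.
Qed.

Lemma make a b c d n : yields (Config a b c (2 * n + 1) d) (Config a b c 1 (d + n)).
Proof.
elim: n d => [|n IH] d; first by rewrite addn0; apply: rt_refl.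
eapply ytrans; first (apply: r1j; lia).
have -> : 2 * n.+1 + 1 - 2 = 2 * n + 1 by lia.
have -> : d + n.+1 = d.+1 + n by lia.
exact: IH.
Qed.

Definition gstep (E : config) : config :=
  let ea := 0 < ca E in let eb := 0 < cb E in let ec := 0 < cc E in
  Config (ca E - ea) (cb E - eb) (cc E - ec) (cx E - (3 - (ea + eb + ec)) + 1) (cd E + 1).

Lemma gstep_ok E : 3 - ((0 < ca E) + (0 < cb E) + (0 < cc E)) <= cx E -> yields E (gstep E).
Proof.
move=> h; apply: rt_step; left.
exists (0 < ca E), (0 < cb E), (0 < cc E), (3 - ((0 < ca E) + (0 < cb E) + (0 < cc E))).
split => //; split.
- case: (0 < ca E); case: (0 < cb E); case: (0 < cc E) => //.
- by case: (ca E).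
- by case: (cb E).
- by case: (cc E).
- exact: h.
Qed.

Lemma pipeline E :
  let g1 := gstep E in let g2 := gstep g1 in let g3 := gstep g2 in
  3 - ((0 < ca E) + (0 < cb E) + (0 < cc E)) <= cx E ->
  3 - ((0 < ca g1) + (0 < cb g1) + (0 < cc g1)) <= cx g1 ->
  3 - ((0 < ca g2) + (0 < cb g2) + (0 < cc g2)) <= cx g2 ->
  3 <= cd g3 ->
  yields E (Config (ca g3) (cb g3) (cc g3) (cx g3 + 7) (cd g3 - 3)).
Proof.
move=> g1 g2 g3 h1 h2 h3 h4.
eapply ytrans; first exact: (gstep_ok h1).
eapply ytrans; first exact: (gstep_ok h2).
eapply ytrans; first exact: (gstep_ok h3).
by apply: rt_step; right.
Qed.

Lemma cperm F : color_perm M F \/ color_perm N F ->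
  [/\ cx F = 0, cd F = 0 &
   (ca F, cb F, cc F) \in [:: (3,3,1); (3,1,3); (1,3,3); (3,2,2); (2,3,2); (2,2,3)]].
Proof.
case: F => x y z u v; rewrite /color_perm /=.
case=> [[hp [-> ->]]|[hp [-> ->]]]; split => //.
- have hx : x \in [:: 3; 3; 1] by rewrite (perm_mem hp) !inE eqxx.
  have hy : y \in [:: 3; 3; 1] by rewrite (perm_mem hp) !inE eqxx orbT.
  have hz : z \in [:: 3; 3; 1] by rewrite (perm_mem hp) !inE eqxx !orbT.
  move: hx hy hz hp; rewrite !inE.
  case: x => [|[|[|[|x]]]] //=; case: y => [|[|[|[|y]]]] //=; case: z => [|[|[|[|z]]]] //=.
- have hx : x \in [:: 3; 2; 2] by rewrite (perm_mem hp) !inE eqxx.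
  have hy : y \in [:: 3; 2; 2] by rewrite (perm_mem hp) !inE eqxx orbT.
  have hz : z \in [:: 3; 2; 2] by rewrite (perm_mem hp) !inE eqxx !orbT.
  move: hx hy hz hp; rewrite !inE.
  case: x => [|[|[|[|x]]]] //=; case: y => [|[|[|[|y]]]] //=; case: z => [|[|[|[|z]]]] //=.
Qed.

Lemma cperm_sum F : color_perm M F \/ color_perm N F ->
  [/\ ca F + cb F + cc F = 7, cx F = 0 & cd F = 0].
Proof.
case/cperm=> -> ->; case: F => x y z ? ? /=.
rewrite !inE => /or4P [/eqP[->->->]|/eqP[->->->]|/eqP[->->->]|].
- by []. - by []. - by [].
by case/or3P=> /eqP[->->->].
Qed.

Lemma contains_jokers F : color_perm M F \/ color_perm N F ->
  yields F (Config 0 0 0 8 0).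
Proof.
move=> h; have [hx hd hin] := cperm h; move: hin.
case: F hx hd {h} => x y z u v /= -> ->.
rewrite !inE => /or4P [/eqP[->->->]|/eqP[->->->]|/eqP[->->->]|].
- by apply: pipeline.
- by apply: pipeline.
- by apply: pipeline.
by case/or3P=> /eqP[->->->]; apply: pipeline.
Qed.

Lemma contains_surv p I : containsMN I -> survival p I.
Proof.
case=> F [hF [h1 h2 h3 h4 h5]].
have eI : I = cadd F (Config (ca I - ca F) (cb I - cb F) (cc I - cc F) (cx I - cx F) (cd I - cd F)).
  by case: I h1 h2 h3 h4 h5 => ? ? ? ? ? /= *; rewrite /cadd /=; f_equal => /=; lia.
set X := Config _ _ _ _ _ in eI.
have Y1 := yields_add X (contains_jokers hF).
rewrite /cadd /= !add0n in Y1.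
set x0 := 8 + cx X in Y1.
have Y2 := @grow (ca X) (cb X) (cc X) x0 (cd X) (x0 + 2 * p + 1).
have Y3 := @make (ca X) (cb X) (cc X) (cd X) (x0 + p).
exists (Config (ca X) (cb X) (cc X) 1 (cd X + (x0 + p))); split.
- rewrite eI; apply: (ytrans Y1); eapply ytrans; first (apply: Y2; lia).
  have -> : x0 + (x0 + 2 * p + 1) = 2 * (x0 + p) + 1 by lia.
  exact: Y3.
- rewrite /cle /=; split => //; lia.
Qed.

Lemma enum_u E0 ua ub uc :
  1 <= ua <= 3 -> 1 <= ub <= 3 -> 1 <= uc <= 3 -> 7 <= ua + ub + uc ->
  ua <= ca E0 -> ub <= cb E0 -> uc <= cc E0 -> containsMN E0.
Proof.
move=> ha hb hc hs h1 h2 h3.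
have cl : forall F, color_perm M F \/ color_perm N F ->
   ca F <= ua -> cb F <= ub -> cc F <= uc -> containsMN E0.
  move=> F hF f1 f2 f3; exists F; split => //.
  have [_ hx hd] := cperm_sum hF; split; lia.
move: ha hb hc hs cl {h1 h2 h3}.
case: ua => [|[|[|[|ua]]]] //=; case: ub => [|[|[|[|ub]]]] //=;
  case: uc => [|[|[|[|uc]]]] //= _ _ _ _ cl.
all: first [ by apply: (cl (Config 3 3 1 0 0)); [left|..]
           | by apply: (cl (Config 3 1 3 0 0)); [left|..]
           | by apply: (cl (Config 1 3 3 0 0)); [left|..]
           | by apply: (cl (Config 3 2 2 0 0)); [right|..]
           | by apply: (cl (Config 2 3 2 0 0)); [right|..]
           | by apply: (cl (Config 2 2 3 0 0)); [right|..] ].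
Qed.

Definition Inv (E0 G : config) : Prop :=
  (cd G = 0 /\ ca G = ca E0 /\ cb G = cb E0 /\ cc G = cc E0 /\ cx G = 0) \/
  (cd G = 1 /\ ca G + 1 = ca E0 /\ cb G + 1 = cb E0 /\ cc G + 1 = cc E0 /\ cx G = 1) \/
  (cd G = 2 /\ exists ua ub uc, ca E0 = ca G + ua /\ cb E0 = cb G + ub /\
      cc E0 = cc G + uc /\ 1 <= ua /\ ua <= 2 /\ 1 <= ub /\ ub <= 2 /\
      1 <= uc /\ uc <= 2 /\ 1 <= cx G /\ cx G <= 2 /\ ua + ub + uc = 4 + cx G).

Lemma Inv_step E0 G H : Inv E0 G -> exchange G H -> Inv E0 H \/ containsMN E0.
Proof.
move=> hI [[ea [eb [ec [j [[h1 h2 h3 h4 h5] ->]]]]]|[h1 ->]]; last first.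
  by exfalso; case: hI => [|[]] [hd _]; rewrite hd in h1.
case: hI => [[hd [ha [hb [hc hx]]]]|[[hd [ha [hb [hc hx]]]]|[hd [ua [ub [uc hu]]]]]].
- left; right; left; rewrite /=.
  move: h1 h2 h3 h4; case: ea; case: eb; case: ec => /= *; lia.
- left; right; right; split => /=; first lia.
  exists (1 + ea), (1 + eb), (1 + ec).
  move: h1 h2 h3 h4; case: ea; case: eb; case: ec => /= *; lia.
- right; apply: (@enum_u E0 (ua + ea) (ub + eb) (uc + ec)); move: hu h1 h2 h3 h4;
  case: ea; case: eb; case: ec => /= *; lia.
Qed.

Lemma Inv_yields E0 G : chips_only E0 -> yields E0 G -> Inv E0 G \/ containsMN E0.
Proof.
move=> [h0x h0d] hy; have {hy} := clos_rt_rtn1 _ _ _ _ hy; elim=> [|y z hyz _ IH].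
  by left; left; rewrite h0x h0d.
case: IH => [hI|]; last by right.
exact: Inv_step hI hyz.
Qed.

Lemma achieve_contains E0 p G : chips_only E0 -> yields E0 G ->
  p <= cd G -> 1 <= p ->
  (p <= 2 -> 2 * p = ca E0 + cb E0 + cc E0) -> containsMN E0.
Proof.
move=> hc hy hp p1 hs2.
case: (Inv_yields hc hy) => // hI; exfalso.
case: hI => [[hd [ha [hb [hc' hx]]]]|[[hd [ha [hb [hc' hx]]]]|[hd [ua [ub [uc hu]]]]]]; lia.
Qed.

Lemma contains_sum E : containsMN E -> 7 <= ca E + cb E + cc E.
Proof. by case=> F [/cperm_sum [hs _ _] [h1 h2 h3 _ _]]; lia. Qed.

Lemma suff_contains E : chips_only E -> sufficient E -> containsMN E.
Proof.
move=> hc [G [hy [_ _ _ _ hd]]]; apply: (achieve_contains hc hy hd) => //.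
Qed.

Lemma cle_refl E : cle E E.
Proof. by split. Qed.

Theorem theorem4p2 :
  (forall E : config,
     minimal_sufficient E <-> (color_perm M E \/ color_perm N E)) /\
  (forall (p : nat) (I : config), 1 <= p -> initial p I ->
     (survival p I <->
      exists F, (color_perm M F \/ color_perm N F) /\ cle F I)) /\
  (forall p : nat, 1 <= p -> (nontrivial_game p <-> 4 <= p)).
Proof.
split; [|split].
- move=> E; split.
  + case=> hc [hs hmin].
    have [F [hF hle]] := suff_contains hc hs.
    case: (classic (F = E)) => [<- //|ne].
    exfalso; apply: (hmin F hle ne); apply: contains_surv.
    by exists F; split => //; apply: cle_refl.
  + move=> hE; have [hs hx hd] := cperm_sum hE.
    have hcE : containsMN E by exists E; split => //; apply: cle_refl.
    split; first by [].
    split; first exact: contains_surv.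
    move=> E' hle ne hs'.
    have hc' : chips_only E'.
      by case: hle => _ _ _ h4 h5; split; lia.
    have h7 := contains_sum (suff_contains hc' hs').
    apply: ne; case: hle hs hx hd h7; case: E' {hc' hs'} => a b c x d;
    case: E {hE hcE} => ? ? ? ? ? /= *.
    f_equal; lia.
- move=> p I p1 [hc hsum]; split.
  + case=> G [hy [_ _ _ _ hd]]; exact: (achieve_contains hc hy hd p1).
  + exact: contains_surv.
- move=> p p1; split.
  + move=> hnt; case: (leqP 4 p) => // hp; exfalso; apply: hnt.
    move=> I [hc hsum] [G [hy [_ _ _ _ hd]]].
    have h2 : p <= 2 -> 2 * p = ca I + cb I + cc I by move=> _; rewrite hsum.
    have := contains_sum (achieve_contains hc hy hd p1 h2); lia.
  + move=> hp htr; apply: (htr (Config (2 * p - 4) 2 2 0 0)).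
      by split => //=; lia.
    apply: contains_surv; exists N; split; first by right; split.
    by split => //=; lia.
Qed.
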